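(* Let $\lambda$ be a nonzero real number and $n$ a positive integer. Then, as polynomials in $x$, $$F_{n+1,\lambda}(x)=(x-n\lambda)F_{n,\lambda}(x)+(x+x^{2})F_{n,\lambda}'(x),$$ where $F_{n,\lambda}'(x)=\frac{d}{dx}F_{n,\lambda}(x)$.
   Context: For real $y$ and integer $k\ge0$: $(y)_{0,\lambda}=1$, $(y)_{k,\lambda}=y(y-\lambda)\cdots(y-(k-1)\lambda)$. The degenerate exponential is $e_\lambda(t)=\sum_{k\ge0}(1)_{k,\lambda}t^k/k!=(1+\lambda t)^{1/\lambda}$. The degenerate Fubini polynomials are defined by $\frac{1}{1-x(e_\lambda(t)-1)}=\sum_{n\ge0}F_{n,\lambda}(x)\frac{t^n}{n!}$. *)

(* Defs.v *)
From HB Require Import structures.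
From mathcomp Require Import all_boot all_order all_algebra.
From mathcomp Require Import reals.
Set Implicit Arguments. Unset Strict Implicit. Unset Printing Implicit Defensive.
Import Order.TTheory GRing.Theory Num.Theory.
Local Open Scope ring_scope.

Definition dfall {R : realType} (y lam : R) (k : nat) : R :=
  \prod_(i < k) (y - i%:R * lam).

(* Formal power series in t are represented by their coefficient sequences
   (coefficient of t^n, NOT of t^n/n!), with coefficients in a ring A. *)
Definition ps_mul {A : ringType} (a b : nat -> A) : nat -> A :=
  fun n => \sum_(i < n.+1) a i * b (n - i)%N.

Definition ps_one {A : ringType} : nat -> A := fun n => if n == 0%N then 1 else 0.

Definition ps_exp {A : ringType} (a : nat -> A) (k : nat) : nat -> A :=
  iter k (ps_mul a) ps_one.

(* Coefficients (in t) of e_lambda(t) - 1 = sum_{m>=1} (1)_{m,lambda} t^m / m!. *)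
Definition elam_minus1 {R : realType} (lam : R) : nat -> R :=
  fun m => if m == 0%N then 0 else dfall 1 lam m / (m`!)%:R.

Definition x_elam_minus1 {R : realType} (lam : R) : nat -> {poly R} :=
  fun m => 'X * (elam_minus1 lam m)%:P.

(* 1/(1 - x(e_lambda(t)-1)) = sum_{k>=0} (x(e_lambda(t)-1))^k as a formal power
   series in t; since x(e_lambda(t)-1) has zero constant term, only k <= n
   contribute to the coefficient of t^n.  F_{n,lambda}(x) is n! times that
   coefficient. *)
Definition dfubini {R : realType} (n : nat) (lam : R) : {poly R} :=
  (n`!)%:R *: \sum_(k < n.+1) ps_exp (x_elam_minus1 lam) k n.

(* Main.v *)
Require Import Defs.
From HB Require Import structures.
From mathcomp Require Import all_boot all_order all_algebra.
From mathcomp Require Import reals.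
From mathcomp Require Import ring zify.
Import Order.TTheory GRing.Theory Num.Theory.
Local Open Scope ring_scope.

Section Aux.
Variable R : realType.
Variable lam : R.

Local Notation e := (elam_minus1 lam).
Local Notation b k n := (ps_exp e k n).
Local Notation A N := (\poly_(i < N) e i).

Lemma bS k n : b k.+1 n = \sum_(i < n.+1) e i * b k (n - i)%N.
Proof. by rewrite /ps_exp iterS. Qed.

Lemma b0 n : b 0 n = if n == 0%N then 1 else 0.
Proof. by []. Qed.

Lemma bA N k n : (n < N)%N -> b k n = ((A N) ^+ k)`_n.
Proof.
elim: k n => [|k IH] n ltnN.
  by rewrite expr0 coef1 b0; case: (n == 0%N).
rewrite bS exprS coefM; apply: eq_bigr => [[i hi]] _.
have hiN : (i < N)%N by apply: leq_ltn_trans ltnN; rewrite -ltnS.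
rewrite coef_poly hiN IH //.
by apply: leq_ltn_trans ltnN; apply: leq_subr.
Qed.

Lemma e0 : e 0 = 0.
Proof. by []. Qed.

Lemma Avan N k n : (n < k)%N -> ((A N) ^+ k)`_n = 0.
Proof.
elim: k n => [|k IH] n // hn.
rewrite exprS coefM big1 // => [[j /= hj]] _.
case: j hj => [|j] hj; first by rewrite coef_poly e0 if_same mul0r.
by rewrite IH ?mulr0 //; rewrite ltnS in hj; lia.
Qed.

Lemma bvan k n : (n < k)%N -> b k n = 0.
Proof. by move=> h; rewrite (@bA n.+1) // Avan. Qed.

Lemma fact_neq0 m : (m`!)%:R != 0 :> R.
Proof. by rewrite pnatr_eq0 -lt0n fact_gt0. Qed.

Lemma eE m : e m.+1 = dfall 1 lam m.+1 / (m.+1)`!%:R.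
Proof. by []. Qed.

Lemma e1 : e 1 = 1.
Proof.
by rewrite eE /dfall big_ord1 mul0r subr0 (_ : 1`! = 1)%N // divr1.
Qed.

Lemma eS j : e j.+2 * j.+2%:R = e j.+1 * (1 - j.+1%:R * lam).
Proof.
rewrite !eE /dfall (factS j.+1) natrM.
have -> : \prod_(i < j.+2) (1 - i%:R * lam) =
  (\prod_(i < j.+1) (1 - i%:R * lam)) * (1 - j.+1%:R * lam) by rewrite big_ord_recr.
have h1 := fact_neq0 j.+1.
have h2 : (j.+2)%:R != 0 :> R by rewrite pnatr_eq0.
have h3 : (2 + j%:R : R) != 0 by rewrite -natrD pnatr_eq0.
by field; rewrite h1 h3.
Qed.

Definition G N := 'X * (A N)^`() + lam%:P * ('X * ('X * (A N)^`())) - 'X * (1 + A N).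

Lemma coefXD (p : {poly R}) i : ('X * p^`())`_i = p`_i *+ i.
Proof. by rewrite coefXM; case: i => [|i]; rewrite ?mulr0n // coef_deriv. Qed.

Lemma G0 N m : (m < N)%N -> (G N)`_m = 0.
Proof.
move=> hm; rewrite /G coefB coefD coefCM coefXD coefXM coefXD coefXM coefD coef1.
case: m hm => [|m] hm /=; first by rewrite mulr0n mulr0 addr0 subr0.
case: m hm => [|m] hm /=; rewrite !coef_poly hm (ltnW hm).
  by rewrite e1 e0 mulr1n mulr0n mulr0 !addr0 subrr.
rewrite add0r -[e m.+2 *+ _]mulr_natr -[e m.+1 *+ _]mulr_natr eS.
move: (e m.+1) => x; ring.
Qed.

Lemma key N k n : (n.+1 < N)%N ->
  n.+1%:R * ((A N) ^+ k)`_n.+1 + lam * n%:R * ((A N) ^+ k)`_n =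
  k%:R * (((A N) ^+ k.-1)`_n + ((A N) ^+ k)`_n).
Proof.
move=> hN.
case: k => [|k].
  by rewrite expr0 !coef1 /=; case: n {hN} => [|n] /=; rewrite !mulr0 ?mul0r !addr0.
set P := (A N) ^+ k.+1.
have E : 'X * P^`() + lam%:P * ('X * ('X * P^`())) =
   ('X * ((A N) ^+ k + (A N) ^+ k.+1)) *+ k.+1 + ((A N) ^+ k * G N) *+ k.+1.
  rewrite /P deriv_exp /G /= exprS; ring.
have := congr1 (fun p : {poly R} => p`_n.+1) E => /=.
rewrite !coefD !coefMn coefCM [('X * ('X * _))`__]coefXM !coefXD [('X * _)`__]coefXM /=.
have -> : ((A N) ^+ k * G N)`_n.+1 = 0.
  rewrite coefM big1 // => [[j /= hj]] _; rewrite G0 ?mulr0 //.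
  by apply: leq_ltn_trans hN; apply: leq_subr.
rewrite mul0rn addr0 coefD => h.
apply: etrans (_ : _ = P`_n.+1 *+ n.+1 + lam * (P`_n *+ n)) _; first ring.
by rewrite h; ring.
Qed.

Lemma brec k n : n.+1%:R * b k n.+1 = k%:R * b k.-1 n + (k%:R - n%:R * lam) * b k n.
Proof.
rewrite !(@bA n.+2) //.
have := @key n.+2 k n (ltnSn _) => h.
apply: (@addIr _ (lam * n%:R * ((A n.+2) ^+ k)`_n)); rewrite h; ring.
Qed.

Lemma xeS k n : ps_exp (x_elam_minus1 lam) k n = 'X^k * (b k n)%:P.
Proof.
elim: k n => [|k IH] n.
  rewrite expr0 mul1r b0 (_ : ps_exp _ 0 n = ps_one n) // /ps_one.
  by case: (n == 0%N); rewrite ?polyC1 ?polyC0.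
rewrite (_ : ps_exp _ k.+1 n = ps_mul (x_elam_minus1 lam) (ps_exp (x_elam_minus1 lam) k) n) //.
rewrite /ps_mul bS rmorph_sum mulr_sumr.
apply: eq_bigr => i _; rewrite IH /x_elam_minus1 rmorphM exprS; ring.
Qed.

Lemma coef_dfubini m j : (dfubini m lam)`_j = (m`!)%:R * b j m.
Proof.
rewrite /dfubini coefZ coef_sum; congr (_ * _).
under eq_bigr => k _ do rewrite xeS coefXnM coefC.
case: (ltnP m j) => hj.
  rewrite bvan // big1 // => [[k /= hk]] _.
  by rewrite ifN; [case: ifP => // /eqP; lia | rewrite -leqNgt; lia].
rewrite (bigD1 (Ordinal (hj : (j < m.+1)%N))) //= ltnn subnn eqxx big1 ?addr0 //.
move=> [k /= hk] hne.
have hkj : k != j by apply: contra hne => /eqP hkj; apply/eqP/val_inj; rewrite /= hkj.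
case: ifP => // /negbT; rewrite -leqNgt => hkj2.
by rewrite ifN //; apply/eqP; move: hkj => /eqP; lia.
Qed.

End Aux.

Theorem theorem14 (R : realType) (lam : R) (n : nat) :
  lam != 0 -> (0 < n)%N ->
  dfubini n.+1 lam =
    ('X - (n%:R * lam)%:P) * dfubini n lam + ('X + 'X^2) * (dfubini n lam)^`().
Proof.
move=> _ hn; apply/polyP => j.
set F := dfubini n lam.
have -> : ('X + 'X^2) * F^`() = 'X * F^`() + 'X * ('X * F^`()) by ring.
rewrite mulrBl coefD coefB coefD coefCM [('X * F)`__]coefXM [('X * ('X * _))`__]coefXM !coefXD.
rewrite /F.
rewrite !coef_dfubini.
case: j => [|j] /=.
  case: n hn F => // n _ _.
  rewrite (_ : ps_one n.+2 = 0) // (_ : ps_one n.+1 = 0) //; ring.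
change (ps_mul (elam_minus1 lam) (ps_exp (elam_minus1 lam) j)) with (ps_exp (elam_minus1 lam) j.+1).
rewrite factS natrM [X in X * _ = _]mulrC -mulrA brec /=; ring.
Qed.
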